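(* Let $\Delta=\{D_1,\dots,D_7\}$ and $\Sigma=\{\sigma_1,\dots,\sigma_5\}\subset\mathbb Z\Delta$ with $\sigma_1=D_1+D_2-D_3-D_7$, $\sigma_2=-D_1+D_2+D_3-D_4-D_6$, $\sigma_3=-D_2+D_3+D_4-D_5$, $\sigma_4=-D_3+D_4+D_5$, $\sigma_5=-D_5+D_6$. Then $D_4$ is minuscule in $\mathbb N\Delta$ (i.e. $E\in\mathbb N\Delta$, $E\le_\Sigma D_4$ implies $E=D_4$), and $$\Gamma_{D_4}=\langle D_1,\ D_2,\ D_4,\ D_3+D_7,\ D_5+D_7,\ D_6+D_7\rangle_{\mathbb N}.$$
   Context: For $D,E\in\mathbb Z\Delta$ write $D\le_\Sigma E$ if $E-D\in\mathbb N\Sigma$. For $D\in\mathbb N\Delta$, $\Gamma_D=\bigcup_{n\in\mathbb N}\{E\in\mathbb N\Delta: E\le_\Sigma nD\}$, a subsemigroup of $\mathbb N\Delta$; $\langle\cdot\rangle_{\mathbb N}$ denotes the generated submonoid. *)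

(* Defs.v *)
From Stdlib Require Import ZArith List.
Import ListNotations.
Open Scope Z_scope.

(* An element of Z Delta: its coordinates on D_1, ..., D_7. *)
Record V := mkV { c1 : Z; c2 : Z; c3 : Z; c4 : Z; c5 : Z; c6 : Z; c7 : Z }.

Definition vadd (x y : V) : V :=
  mkV (c1 x + c1 y) (c2 x + c2 y) (c3 x + c3 y) (c4 x + c4 y)
      (c5 x + c5 y) (c6 x + c6 y) (c7 x + c7 y).
Definition vsub (x y : V) : V :=
  mkV (c1 x - c1 y) (c2 x - c2 y) (c3 x - c3 y) (c4 x - c4 y)
      (c5 x - c5 y) (c6 x - c6 y) (c7 x - c7 y).
Definition vscale (n : nat) (x : V) : V :=
  let k := Z.of_nat n in
  mkV (k * c1 x) (k * c2 x) (k * c3 x) (k * c4 x) (k * c5 x) (k * c6 x) (k * c7 x).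
Definition vzero : V := mkV 0 0 0 0 0 0 0.

Definition D1 := mkV 1 0 0 0 0 0 0.
Definition D2 := mkV 0 1 0 0 0 0 0.
Definition D3 := mkV 0 0 1 0 0 0 0.
Definition D4 := mkV 0 0 0 1 0 0 0.
Definition D5 := mkV 0 0 0 0 1 0 0.
Definition D6 := mkV 0 0 0 0 0 1 0.
Definition D7 := mkV 0 0 0 0 0 0 1.

Definition sigma1 := mkV 1 1 (-1) 0 0 0 (-1).
Definition sigma2 := mkV (-1) 1 1 (-1) 0 (-1) 0.
Definition sigma3 := mkV 0 (-1) 1 1 (-1) 0 0.
Definition sigma4 := mkV 0 0 (-1) 1 1 0 0.
Definition sigma5 := mkV 0 0 0 0 (-1) 1 0.

Definition NDelta (x : V) : Prop :=
  0 <= c1 x /\ 0 <= c2 x /\ 0 <= c3 x /\ 0 <= c4 x /\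
  0 <= c5 x /\ 0 <= c6 x /\ 0 <= c7 x.

Definition NSigma (x : V) : Prop :=
  exists n1 n2 n3 n4 n5 : nat,
    x = vadd (vscale n1 sigma1) (vadd (vscale n2 sigma2) (vadd (vscale n3 sigma3)
          (vadd (vscale n4 sigma4) (vscale n5 sigma5)))).

Definition leSigma (D E : V) : Prop := NSigma (vsub E D).

Definition Gamma (D : V) (E : V) : Prop :=
  NDelta E /\ exists n : nat, leSigma E (vscale n D).

Definition minuscule (D : V) : Prop :=
  forall E, NDelta E -> leSigma E D -> E = D.

Inductive InMonoid (gs : list V) : V -> Prop :=
  | InMonoid_zero : InMonoid gs vzero
  | InMonoid_add : forall x g, InMonoid gs x -> In g gs -> InMonoid gs (vadd x g).

(* Main.v *)
Require Import Defs.
From Stdlib Require Import ZArith List Lia.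
Import ListNotations.

Lemma natof (z : Z) : 0 <= z -> exists k : nat, Z.of_nat k = z.
Proof. intros; exists (Z.to_nat z); lia. Qed.

Definition good (E : V) : Prop := NDelta E /\ c7 E = c3 E + c5 E + c6 E.

Lemma mon_good gs E : InMonoid gs E ->
  (forall g, In g gs -> good g) -> good E.
Proof.
  induction 1; intros Hg.
  - unfold good, NDelta; simpl; lia.
  - specialize (IHInMonoid Hg). specialize (Hg g H0).
    destruct x, g; unfold good, NDelta in *; simpl in *; lia.
Qed.

Definition gens := [D1; D2; D4; vadd D3 D7; vadd D5 D7; vadd D6 D7].

Lemma good_mon_aux : forall m E, good E ->
  Z.to_nat (c1 E + c2 E + c4 E + c7 E) = m ->
  InMonoid gens E.
Proof.
  induction m; intros E HE Hm; destruct E as [a b c d e f g];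
    unfold good, NDelta in HE; simpl in *.
  - replace (mkV a b c d e f g) with vzero by (unfold vzero; f_equal; lia).
    constructor.
  - assert (Hstep : forall x y, In y gens -> good x ->
       mkV a b c d e f g = vadd x y ->
       Z.to_nat (c1 x + c2 x + c4 x + c7 x) = m ->
       InMonoid gens (mkV a b c d e f g)).
    { intros x y Hy Hx Heq Hmx. rewrite Heq. constructor; auto. }
    destruct (Z.eq_dec a 0); [|apply (Hstep (mkV (a-1) b c d e f g) D1);
      [simpl; tauto | unfold good, NDelta; simpl; lia
      | unfold vadd, D1, D2, D3, D4, D5, D6, D7; simpl; f_equal; lia | simpl; lia]].
    destruct (Z.eq_dec b 0); [|apply (Hstep (mkV a (b-1) c d e f g) D2);
      [simpl; tauto | unfold good, NDelta; simpl; lia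
      | unfold vadd, D1, D2, D3, D4, D5, D6, D7; simpl; f_equal; lia | simpl; lia]].
    destruct (Z.eq_dec d 0); [|apply (Hstep (mkV a b c (d-1) e f g) D4);
      [simpl; tauto | unfold good, NDelta; simpl; lia
      | unfold vadd, D1, D2, D3, D4, D5, D6, D7; simpl; f_equal; lia | simpl; lia]].
    destruct (Z.eq_dec c 0); [|apply (Hstep (mkV a b (c-1) d e f (g-1)) (vadd D3 D7));
      [simpl; tauto | unfold good, NDelta; simpl; lia
      | unfold vadd, D1, D2, D3, D4, D5, D6, D7; simpl; f_equal; lia | simpl; lia]].
    destruct (Z.eq_dec e 0); [|apply (Hstep (mkV a b c d (e-1) f (g-1)) (vadd D5 D7));
      [simpl; tauto | unfold good, NDelta; simpl; lia
      | unfold vadd, D1, D2, D3, D4, D5, D6, D7; simpl; f_equal; lia | simpl; lia]].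
    destruct (Z.eq_dec f 0); [|apply (Hstep (mkV a b c d e (f-1) (g-1)) (vadd D6 D7));
      [simpl; tauto | unfold good, NDelta; simpl; lia
      | unfold vadd, D1, D2, D3, D4, D5, D6, D7; simpl; f_equal; lia | simpl; lia]].
    exfalso; lia.
Qed.

Theorem mainTheorem15 :
  NDelta D4 /\ minuscule D4 /\
  (forall E : V,
     Gamma D4 E <->
     InMonoid [D1; D2; D4; vadd D3 D7; vadd D5 D7; vadd D6 D7] E).
Proof.
  split; [unfold NDelta; simpl; lia|]. split.
  - intros [a b c d e f g] HN [n1 [n2 [n3 [n4 [n5 H]]]]].
    unfold NDelta in HN; simpl in HN.
    pose proof (f_equal c1 H) as E1. pose proof (f_equal c2 H) as E2.
    pose proof (f_equal c3 H) as E3. pose proof (f_equal c4 H) as E4.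
    pose proof (f_equal c5 H) as E5. pose proof (f_equal c6 H) as E6.
    pose proof (f_equal c7 H) as E7. unfold vsub, vadd, vscale, D4, sigma1, sigma2, sigma3, sigma4, sigma5 in *; cbn [c1 c2 c3 c4 c5 c6 c7] in *.
    f_equal; lia.
  - intros E. split.
    + intros [HN [n [n1 [n2 [n3 [n4 [n5 H]]]]]]].
      eapply (good_mon_aux _ E); [|reflexivity].
      destruct E as [a b c d e f g]; unfold good; split; [exact HN|].
      pose proof (f_equal c3 H) as E3. pose proof (f_equal c5 H) as E5.
      pose proof (f_equal c6 H) as E6. pose proof (f_equal c7 H) as E7.
      unfold vsub, vadd, vscale, D4, sigma1, sigma2, sigma3, sigma4, sigma5 in *; cbn [c1 c2 c3 c4 c5 c6 c7] in *. lia.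
    + intros HM. apply mon_good in HM.
      2:{ intros g Hg; simpl in Hg;
          repeat destruct Hg as [<-|Hg]; try contradiction;
          unfold good, NDelta; simpl; lia. }
      destruct HM as [HN H7]. split; [exact HN|].
      destruct E as [a b c d e f g]; unfold NDelta in HN; simpl in *.
      destruct (natof g) as [n1 Hn1]; [lia|].
      destruct (natof (a + g)) as [n2 Hn2]; [lia|].
      destruct (natof (b + g + a + g)) as [n3 Hn3]; [lia|].
      destruct (natof (a + g - f)) as [n5 Hn5]; [lia|].
      destruct (natof (b + g + a + g + a + g - f - e)) as [n4 Hn4]; [lia|].
      destruct (natof (d - (a+g) + (b + g + a + g) + (b + g + a + g + a + g - f - e))) as [n Hn]; [lia|].
      exists n, n1, n2, n3, n4, n5.
      unfold vsub, vscale, vadd; simpl. rewrite Hn, Hn1, Hn2, Hn3, Hn4, Hn5.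
      f_equal; lia.
Qed.
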